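(* Let the words $C_n$, $D_n$ over $\{1,2\}$ be defined by $C_0=D_0=\varepsilon$ (the empty word), $C_{k+1}=C_k\,1\,D_k$, $D_{k+1}=C_k\,2\,D_k$ for $k\ge 0$ (so $C_1=1$, $D_1=2$). Let $\tau=\tau_1\tau_2\cdots\tau_\ell$ ($\ell\ge 1$) be a pattern without internal dashes over $\{1,2\}$, and for a word $w$ let $\mathrm{occ}_\tau(w)$ denote the number of occurrences of $\tau$ in $w$, i.e. the number of factors (blocks of consecutive letters) $w_iw_{i+1}\cdots w_{i+\ell-1}$ of $w$ whose reduced form is $\tau$. Write $c_n^{\tau}=\mathrm{occ}_\tau(C_n)$ and $d_n^{\tau}=\mathrm{occ}_\tau(D_n)$. Let $k=\lceil \log_2\ell\rceil$, $a=\mathrm{occ}_\tau(\mathcal K_\ell(D_k1C_k))$ and $b=\mathrm{occ}_\tau(\mathcal K_\ell(D_k2C_k))$. Then for all $n>k+1$, $$c_n^{\tau}=\bigl(a+b+c_{k+1}^{\tau}+d_{k+1}^{\tau}\bigr)\cdot 2^{n-k-2}-b,\qquad d_n^{\tau}=\bigl(a+b+c_{k+1}^{\tau}+d_{k+1}^{\tau}\bigr)\cdot 2^{n-k-2}-a.$$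
   Context: Reduced form of a word over $\{1,2\}$: if the word contains both letters it is the word itself; if it consists of a single repeated letter $x^\ell$ its reduced form is $1^\ell$. So a pattern $\tau$ is a word over $\{1,2\}$ that is either $1^\ell$ or contains both letters; an occurrence of $1^\ell$ is any constant factor of length $\ell$, while an occurrence of a pattern containing both letters is a factor equal to it. Kernel: if $W=A\,x\,B$ where $A,B$ are words of the same length and $x$ is a letter, the kernel of order $j$, $\mathcal K_j(W)$, is the word consisting of the $j-1$ rightmost letters of $A$, followed by $x$, followed by the $j-1$ leftmost letters of $B$; if $|A|<j-1$ then $\mathcal K_j(W)$ is the empty word. Example: $\mathcal K_3(111211221)=12112$. Note $|C_k|=|D_k|=2^k-1$, so $D_k1C_k$ and $D_k2C_k$ have this form with $A=D_k$, $B=C_k$. *)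

(* Defs.v *)
From mathcomp Require Import all_boot all_order all_algebra.
Set Implicit Arguments. Unset Strict Implicit. Unset Printing Implicit Defensive.

(* Words over the alphabet {1,2} are represented as sequences of naturals
   whose letters are 1 and 2. *)
Definition word := seq nat.

Fixpoint CD (k : nat) : word * word :=
  match k with
  | 0 => ([::], [::])
  | k'.+1 => let (c, d) := CD k' in (c ++ 1 :: d, c ++ 2 :: d)
  end.

Definition Cw (k : nat) : word := (CD k).1.
Definition Dw (k : nat) : word := (CD k).2.

Definition reduced (f : word) : word :=
  if (1 \in f) && (2 \in f) then f else nseq (size f) 1.

Definition is_pattern (tau : word) : bool :=
  all (fun x => x \in [:: 1; 2]) tau &&
  ((tau == nseq (size tau) 1) || ((1 \in tau) && (2 \in tau))).

Definition occ (tau w : word) : nat :=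
  count (fun i => (i + size tau <= size w) &&
                  (reduced (take (size tau) (drop i w)) == tau))
        (iota 0 (size w)).

(* kernel of order j of W = A x B with |A| = |B| = m:
   the j-1 rightmost letters of A, x, the j-1 leftmost letters of B;
   empty if m < j-1. *)
Definition kernel (j : nat) (W : word) : word :=
  let m := (size W) %/ 2 in
  if m < j.-1 then [::] else drop (m - j.-1) (take (m + j) W).

(* Main.v *)
Require Import Defs.
From mathcomp Require Import all_boot all_order all_algebra.
From mathcomp Require Import zify.
Import GRing.Theory Num.Theory.

Ltac mlia := try change (Equality.sort Datatypes_nat__canonical__eqtype_Equality) with nat in *; lia.

Fixpoint occ' (tau w : word) : nat :=
  match w with
  | [::] => 0
  | y :: w' => (reduced (take (size tau) (y :: w')) == tau) + occ' tau w'
  end.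

Lemma size_reduced f : size (reduced f) = size f.
Proof. by rewrite /reduced; case: ifP => // _; rewrite size_nseq. Qed.

Lemma occE tau w : occ tau w = occ' tau w.
Proof.
rewrite /occ.
transitivity (count (fun i => reduced (take (size tau) (drop i w)) == tau)
                    (iota 0 (size w))).
  apply: eq_in_count => i; rewrite mem_iota add0n => /andP [_ Hi].
  move: (i : nat) Hi => {}i Hi.
  case E: (reduced _ == tau); rewrite ?andbF ?andbT //.
  move/eqP: E => /(congr1 size); rewrite size_reduced size_take size_drop.
  rewrite -[size tau]/(@size nat tau).
  set x := @size nat tau; set y := size w.
  case: ifP; mlia.
elim: w => [|y w IH] //=.
rewrite -IH; congr (_ + _).
rewrite -[1%N]/(1 + 0)%N iotaDl count_map.
by apply: eq_count => i.
Qed.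

Lemma occ'_small tau w : size w < size tau -> occ' tau w = 0.
Proof.
elim: w => [|y w IH] //= H.
rewrite IH; last by mlia.
case E: (reduced _ == tau) => //.
move/eqP: E => /(congr1 size); rewrite size_reduced size_take /=.
case: ifP; mlia.
Qed.

Lemma occS tau u t :
  occ' tau (u ++ t) = occ' tau u + occ' tau (drop (size u - (size tau).-1) u ++ t).
Proof.
elim: u => [|y u IH]; first by [].
case: (leqP (size (y :: u)) (size tau).-1) => H.
  have -> : (size (y :: u) - (size tau).-1 = 0)%N by mlia.
  rewrite drop0 (@occ'_small tau (y :: u)) //; move: H => /=; mlia.
move: H => /= H.
rewrite subSn; last by mlia.
rewrite /= IH addnA; congr (_ + _ + _).
by rewrite -cat_cons takel_cat //=; mlia.
Qed.

Lemma occP tau s v : 0 < size tau ->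
  occ' tau (s ++ v) = occ' tau (s ++ take (size tau).-1 v) + occ' tau v.
Proof.
move=> Hl.
elim: s => [|y s IH] /=.
  rewrite (@occ'_small tau (take _ v)) // size_take; case: ifP; mlia.
rewrite IH addnA; congr (_ + _ + _).
rewrite -(prednK Hl) /= !take_cat.
case: ifP => // _.
by rewrite take_takel // leq_subr.
Qed.

Lemma CwS k : Cw k.+1 = Cw k ++ 1 :: Dw k.
Proof. by rewrite /Cw /Dw /=; case: (CD k). Qed.
Lemma DwS k : Dw k.+1 = Cw k ++ 2 :: Dw k.
Proof. by rewrite /Cw /Dw /=; case: (CD k). Qed.

Lemma size_CD k : size (Cw k) = (2 ^ k).-1 /\ size (Dw k) = (2 ^ k).-1.
Proof.
elim: k => [|k [IH1 IH2]]; first by [].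
rewrite CwS DwS !size_cat /= IH1 IH2 expnS.
have := expn_gt0 2 k; mlia.
Qed.

Lemma ends k n : k < n ->
  (exists p, Cw n = p ++ Dw k) /\ (exists p, Dw n = p ++ Dw k) /\
  (exists q, Cw n = Cw k ++ q) /\ (exists q, Dw n = Cw k ++ q).
Proof.
elim: n => [|n IH] //; rewrite ltnS leq_eqVlt => /orP [/eqP <-|H].
  rewrite CwS DwS; split; [exists (Cw k ++ [:: 1]) | split; [exists (Cw k ++ [:: 2]) | split; [exists (1 :: Dw k) | exists (2 :: Dw k)]]];
  by rewrite -?catA.
have [_ [[p Hp] [[q Hq] _]]] := IH H.
rewrite CwS DwS Hp Hq.
split; [exists ((Cw k ++ q) ++ 1 :: p) | split; [exists ((Cw k ++ q) ++ 2 :: p) | split; [exists (q ++ 1 :: p ++ Dw k) | exists (q ++ 2 :: p ++ Dw k)]]];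
by rewrite -?catA /= -?catA.
Qed.

Lemma drop_cat_le (T : Type) n (s t : seq T) : n <= size s -> drop n (s ++ t) = drop n s ++ t.
Proof.
rewrite drop_cat leq_eqVlt => /orP [/eqP ->|->] //.
by rewrite ltnn subnn drop0 drop_size.
Qed.

Lemma kernelE (tau : word) k (x : nat) : 0 < size tau -> size tau <= 2 ^ k ->
  kernel (size tau) (Dw k ++ x :: Cw k) =
  drop (size (Dw k) - (size tau).-1) (Dw k) ++ x :: take (size tau).-1 (Cw k).
Proof.
move=> H0 H1; have [S1 S2] := size_CD k.
rewrite /kernel size_cat /= S1 S2.
have -> : (((2 ^ k).-1 + ((2 ^ k).-1).+1) %/ 2 = (2 ^ k).-1)%N.
  have := expn_gt0 2 k => Hp.
  mlia.
rewrite ifF; last by mlia.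
rewrite take_cat S2 ifF; last by mlia.
rewrite -S2 drop_cat_le; last by mlia.
rewrite -[(_ + size tau - _)%N]/((_ + size tau - _)%N).
have -> : (size (Dw k) + size tau - size (Dw k) = (size tau).-1.+1)%N by mlia.
by [].
Qed.

Lemma recur (tau : word) k n (x : nat) : 0 < size tau -> size tau <= 2 ^ k -> k < n ->
  occ' tau (Cw n ++ x :: Dw n) =
  occ' tau (Cw n) + occ' tau (Dw n) + occ' tau (kernel (size tau) (Dw k ++ x :: Cw k)).
Proof.
move=> H0 H1 Hn.
have [[p Hp] [_ [_ [q Hq]]]] := ends _ _ Hn.
have [S1 S2] := size_CD k.
rewrite kernelE // occS.
set d := (size (Cw n) - _)%N.
have -> : drop d (Cw n) ++ x :: Dw n = (drop d (Cw n) ++ [:: x]) ++ Dw n by rewrite -catA.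
rewrite (occP _ _ _ H0) -catA /= -addnA; congr (_ + _); rewrite addnC; congr (_ + _).
congr (occ' _ (_ ++ _ :: _)).
  rewrite /d Hp size_cat drop_cat ifF; last by mlia.
  congr drop; mlia.
by rewrite Hq takel_cat //; mlia.
Qed.

Local Open Scope ring_scope.

Theorem theorem4 (tau : word) :
  is_pattern tau -> (0 < size tau)%N ->
  let l := size tau in
  let k := up_log 2 l in
  let a := occ tau (kernel l (Dw k ++ 1%N :: Cw k)) in
  let b := occ tau (kernel l (Dw k ++ 2%N :: Cw k)) in
  let S := (a + b + occ tau (Cw k.+1) + occ tau (Dw k.+1))%N in
  forall n : nat, (k.+1 < n)%N ->
    (occ tau (Cw n))%:Z = (S * 2 ^ (n - k.+2))%N%:Z - b%:Z /\
    (occ tau (Dw n))%:Z = (S * 2 ^ (n - k.+2))%N%:Z - a%:Z.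
Proof.
move=> _ H0 l k a b S.
have Hk : (l <= 2 ^ k)%N by apply: up_logP.
have RC m : (k < m)%N -> occ tau (Cw m.+1) = (occ tau (Cw m) + occ tau (Dw m) + a)%N.
  by move=> Hm; rewrite CwS /a !occE (recur _ _ _ _ H0 Hk Hm).
have RD m : (k < m)%N -> occ tau (Dw m.+1) = (occ tau (Cw m) + occ tau (Dw m) + b)%N.
  by move=> Hm; rewrite DwS /b !occE (recur _ _ _ _ H0 Hk Hm).
have Hs m : (k < m)%N -> (occ tau (Cw m) + occ tau (Dw m) + a + b = S * 2 ^ (m - k.+1))%N.
  elim: m => [|m IH] //; rewrite ltnS leq_eqVlt => /orP [/eqP <-|Hm].
    by rewrite subnn expn0 muln1 /S; mlia.
  have E : (m.+1 - k.+1 = (m - k.+1).+1)%N by mlia.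
  rewrite RC // RD // E expnS mulnCA -IH //; mlia.
move=> n Hn.
have [m Em] : exists m, n = m.+1 by exists n.-1; mlia.
subst n.
have Hm : (k < m)%N by mlia.
have E : (m.+1 - k.+2 = m - k.+1)%N by mlia.
rewrite RC // RD // E -(Hs m Hm).
split; apply/eqP; rewrite eq_sym subr_eq -!PoszD; apply/eqP; congr Posz; mlia.
Qed.
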